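(* Assume Cramér's conjecture. Then for every positive integer $m$ there exists $n_0$ such that every integer $n\ge n_0$ having exactly $m$ distinct prime factors satisfies Condition 1.
   Context: Let $p_i$ denote the $i$-th prime. Cramér's conjecture: there exist constants $M$ and $N$ such that whenever $p_i\ge N$, $p_{i+1}-p_i\le M(\log p_i)^2$. A positive integer $n$ satisfies Condition 1 if there exist primes $p$ and $q$ such that for all integers $k$ with $1\le k\le n-1$, $\binom{n}{k}$ is divisible by $p$ or $q$. *)

(* Defs.v *)
From mathcomp Require Import all_boot.
From Stdlib Require Import Reals.

Definition consecutive_primes (p q : nat) : Prop :=
  prime p /\ prime q /\ (p < q)%N /\ (forall r : nat, (p < r)%N -> (r < q)%N -> ~~ prime r).

Definition cramer_conjecture : Prop :=
  exists (M : R) (N : nat),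
    forall p q : nat, consecutive_primes p q -> (N <= p)%N ->
      (INR q - INR p <= M * (ln (INR p)) ^ 2)%R.

Definition condition1 (n : nat) : Prop :=
  exists p q : nat, prime p /\ prime q /\
    forall k : nat, (1 <= k)%N -> (k <= n - 1)%N -> (p %| 'C(n, k))%N || (q %| 'C(n, k))%N.

(* Main.v *)
Require Import Defs.
From mathcomp Require Import all_boot.
From Stdlib Require Import Reals.
From mathcomp Require Import zify.
From Stdlib Require Import Lra Psatz.
Local Notation "a ^ b" := (expn a b) : nat_scope.

Lemma prime_dvd_fact_le p k : prime p -> p %| k`! -> p <= k.
Proof.
move=> pp; elim: k => [|k IH]; first by rewrite fact0 Euclid_dvd1.
rewrite factS Euclid_dvdM // => /orP[h|h].
- exact: dvdn_leq h.
- by apply: leqW; apply: IH.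
Qed.

Lemma L1 {q b n k} : prime q -> q ^ b %| n -> 0 < k -> k < q ^ b -> q %| 'C(n, k).
Proof.
move=> pq hQ k0 kQ.
have b0 : 0 < b by case: b kQ hQ => [|b] //; rewrite expn0; lia.
apply/negPn/negP => hC.
have cop : coprime (q ^ b) 'C(n, k) by rewrite coprime_pexpl // prime_coprime.
have : q ^ b %| k * 'C(n, k).
  move: k0 kQ hC cop; case: k => // k _ _ _ _.
  by rewrite -mul_bin_diag; apply: dvdn_mulr.
rewrite Gauss_dvdl // => /dvdn_leq => /(_ k0); lia.
Qed.

Lemma L2 p n k : prime p -> p <= n -> k < p -> n - k < p -> p %| 'C(n, k).
Proof.
move=> pp pn kp nkp.
have kn : k <= n by lia.
have h := bin_fact kn.
have : p %| n`! by apply: dvdn_fact; rewrite pn prime_gt0.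
rewrite -h !Euclid_dvdM // => /orP[//|/orP[/(prime_dvd_fact_le _ _ pp)|/(prime_dvd_fact_le _ _ pp)]]; lia.
Qed.

Lemma L4 q b p n : prime q -> q ^ b %| n -> prime p -> p <= n -> n < p + q ^ b ->
  forall k, 1 <= k -> k <= n - 1 -> (p %| 'C(n, k)) || (q %| 'C(n, k)).
Proof.
move=> pq hQ pp pn np k k1 kn.
have [kQ|kQ] := ltnP k (q ^ b); first by rewrite (L1 pq hQ) ?orbT.
have [nkQ|nkQ] := ltnP (n - k) (q ^ b).
  by rewrite -bin_sub; [rewrite (L1 pq hQ) ?orbT //; lia | lia].
by rewrite L2 //; lia.
Qed.

Lemma prod_max (s : seq (nat * nat)) (g : nat * nat -> nat) : s != [::] ->
  exists2 x, x \in s & \prod_(f <- s) g f <= g x ^ size s.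
Proof.
elim: s => // a t IH _.
case: t IH => [|b t] IH.
  by exists a; rewrite ?mem_head // big_cons big_nil muln1 expn1.
have [x xt hx] := IH isT.
rewrite big_cons /=.
have [ax|ax] := leqP (g a) (g x).
  exists x; first by rewrite inE xt orbT.
  by rewrite expnS leq_mul.
exists a; first by rewrite mem_head.
rewrite expnS leq_mul //; apply: leq_trans hx _.
by rewrite leq_exp2r // ltnW.
Qed.

Lemma big_pp {n m} : 0 < n -> size (primes n) = m -> 0 < m ->
  exists q b, [/\ prime q, q ^ b %| n & n <= (q ^ b) ^ m].
Proof.
move=> n0 hs m0.
have ne : prime_decomp n != [::].
  by rewrite prime_decompE -size_eq0 size_map hs -lt0n.
have [[q b] xin hx] := prod_max _ (fun f => expn f.1 f.2) ne.
have [pq _ dv] := mem_prime_decomp xin.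
exists q, b; split => //.
rewrite {1}(prod_prime_decomp n0); apply: leq_trans hx _.
by rewrite prime_decompE size_map hs.
Qed.
Local Open Scope R_scope.

Lemma ln_nonneg x : 1 <= x -> 0 <= ln x.
Proof.
move=> hx; case: (Rle_lt_or_eq_dec _ _ hx) => h.
- rewrite -ln_1; left; apply: ln_increasing; lra.
- rewrite -h ln_1; lra.
Qed.

Lemma real_bound (C : R) : exists x0 : nat, forall x : nat, (x0 <= x)%nat ->
  C * ln (INR x) ^ 2 <= INR x.
Proof.
have [n hn] := INR_unbounded (256 * C * C).
exists (S n) => x hx.
have hx1 : INR (S n) <= INR x by apply: le_INR; apply/leP.
have hn1 : 256 * C * C < INR x by rewrite S_INR in hx1; lra.
have x1 : 1 <= INR x by rewrite S_INR in hx1; have := pos_INR n; lra.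
set X := INR x in hn1 x1 *.
set u := ln X / 4.
have u0 : 0 <= u by have := ln_nonneg _ x1; rewrite /u; lra.
have ue : u < exp u.
  case: (Req_dec u 0) => h; first by rewrite h exp_0; lra.
  have := exp_ineq1 _ h; lra.
have eX : exp u ^ 4 = X.
  transitivity (exp (ln X)); last by apply: exp_ln; lra.
  have -> : ln X = u + u + u + u by rewrite /u; field.
  rewrite !exp_plus; ring.
have u4 : u ^ 4 <= X by rewrite -eX; apply: pow_incr; lra.
have -> : ln X = 4 * u by rewrite /u; field.
case: (Rle_lt_dec C 0) => hC.
  have : 0 <= (4 * u) ^ 2 by apply: pow_le; lra.
  nra.
set w := C * (4 * u) ^ 2.
have w0 : 0 <= w by rewrite /w; have := pow_le (4*u) 2; nra.
have ww : w * w <= 256 * C * C * X.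
  have -> : w * w = 256 * C * C * u ^ 4 by rewrite /w; ring.
  apply: Rmult_le_compat_l => //; nra.
have : w * w < X * X by nra.
nra.
Qed.

Lemma ln_le_nat {a b : nat} : (1 <= a)%nat -> (a <= b)%nat -> 0 <= ln (INR a) <= ln (INR b).
Proof.
move=> a1 ab.
have ha : 1 <= INR a by have := le_INR 1 a; simpl => h; apply: h; apply/leP.
have hab : INR a <= INR b by apply: le_INR; apply/leP.
split; first exact: ln_nonneg.
case: (Rle_lt_or_eq_dec _ _ hab) => h.
- left; apply: ln_increasing; lra.
- rewrite h; lra.
Qed.

Lemma expn_pow a b : expn a b = Nat.pow a b.
Proof. by elim: b => [|b IH] //; rewrite expnS IH. Qed.

Close Scope R_scope.

Theorem mainTheorem16 :
  cramer_conjecture ->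
  forall m : nat, (0 < m)%N ->
    exists n0 : nat, forall n : nat, (n0 <= n)%N -> size (primes n) = m -> condition1 n.
Proof.
move=> [M [N HC]] m m0.
have [Q0 HQ0] := real_bound (Rabs M * INR m ^ 2)%R.
have [r0 Nr0 pr0] := prime_above N.
set Q1 := (Q0 + r0 + 2)%N.
exists (Q1 ^ m)%N => n hn hs.
have n0 : (0 < n)%N by apply: leq_trans _ hn; rewrite expn_gt0; lia.
have [q [b [pq dv nle]]] := big_pp n0 hs m0.
set Q := (q ^ b)%N in dv nle.
have QQ1 : (Q1 <= Q)%N.
  rewrite leqNgt; apply/negP => h.
  have : (Q ^ m < Q1 ^ m)%N by rewrite ltn_exp2r.
  lia.
have b0 : (0 < b)%N by move: QQ1; rewrite /Q; clear; case: b => //; rewrite expn0; lia.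
have qn : (q %| n)%N by apply: dvdn_trans dv; rewrite dvdn_exp.
have qn' : (q <= n)%N by apply: dvdn_leq.
have q0 : (0 < q)%N by apply: prime_gt0.
have [QE|Qlt] := eqVneq Q n.
  exists q, q; split => //; split => //.
  apply: (L4 _ _ _ _ pq dv pq qn'); lia.
have [r hr] := dvdnP dv.
have rr : (2 <= r)%N.
  case: r hr => [|[|r]] hr //; [lia | by move: Qlt; rewrite hr mul1n eqxx].
have Qx : (Q <= n - Q)%N by rewrite hr; nia.
set x := (n - Q)%N in Qx.
have exP : exists i, (prime i && (i <= x))%N by exists r0; rewrite pr0 /=; lia.
have ubP : forall i, (prime i && (i <= x))%N -> (i <= x)%N by move=> i /andP[].
case: (ex_maxnP exP ubP) => p' /andP[pp' p'x] p'max.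
have r0p : (r0 <= p')%N by apply: p'max; rewrite pr0 /=; lia.
have exQ : exists i, (prime i && (p' < i))%N.
  by have [z hz pz] := prime_above p'; exists z; rewrite pz hz.
have [q' /andP[pq' p'q'] q'min] := find_ex_minn exQ.
have cons : consecutive_primes p' q'.
  split; first by []; split; first by []; split; first by []; move=> z h1 h2; apply/negP => pz.
  have := q'min z; rewrite pz h1 => /(_ isT); lia.
have xq' : (x < q')%N.
  rewrite ltnNge; apply/negP => h.
  have := p'max q'; rewrite pq' h => /(_ isT); lia.
have HC' := HC p' q' cons ltac:(lia).
have p'1 : (1 <= p')%N by apply: ltnW; apply: prime_gt1.
have p'n : (p' <= n)%N by lia.
have [lp lpn] := ln_le_nat p'1 p'n.
have Q1' : (1 <= Q)%N by lia.
have [lQ _] := ln_le_nat Q1' (leqnn Q).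
have n1 : (1 <= n)%N by lia.
have [ln0 lnQ] := ln_le_nat n1 nle.
rewrite expn_pow pow_INR ln_pow in lnQ; last by have := le_INR 1 Q; simpl => h; apply: Rlt_le_trans (h _) => //; [lra | apply/leP].
have key : (M * ln (INR p') ^ 2 <= INR Q)%R.
  apply: Rle_trans (HQ0 Q ltac:(lia)).
  apply: Rle_trans (_ : Rabs M * ln (INR p') ^ 2 <= _)%R.
    apply: Rmult_le_compat_r; [by apply: pow_le | exact: Rle_abs].
  have hM := Rabs_pos M.
  have h1 : (ln (INR p') ^ 2 <= (INR m * ln (INR Q)) ^ 2)%R.
    by apply: pow_incr; lra.
  have -> : (Rabs M * INR m ^ 2 * ln (INR Q) ^ 2 = Rabs M * (INR m * ln (INR Q)) ^ 2)%R by ring.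
  by apply: Rmult_le_compat_l.
have : (INR q' <= INR (p' + Q))%R by rewrite plus_INR; lra.
move/INR_le => hq'.
exists q', q; split => //; split => //.
apply: (L4 _ _ _ _ pq dv pq'); lia.
Qed.
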